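(* Let $K\ge2$, $0\le\beta_k\le1$ and $0<\varpi<2$. Let $X,Y$ be random variables on $K$-letter alphabets $\{x_1,\dots,x_K\}$, $\{y_1,\dots,y_K\}$ whose joint law is $p(y_j)p(x_i\mid y_j)$, where $p(y)$ ranges over all distributions on $\{y_1,\dots,y_K\}$ and the backward matrix is fixed as $p(x_i\mid y_i)=1-\beta_k$ and $p(x_i\mid y_j)=\beta_k/(K-1)$ for $i\ne j$. Then $$\max\big\{L(\varpi,X)-L(\varpi,X\mid Y)\big\}=e^{\varpi(K-1)/K}-\Big((1-\beta_k)e^{\varpi\beta_k}+\beta_k e^{\varpi\left(1-\frac{\beta_k}{K-1}\right)}\Big),$$ where the maximum is over the distributions $p(y)$ (equivalently over the induced input distributions $p(x_i)=\sum_j p(y_j)p(x_i\mid y_j)$), and it is attained when $X$ (equivalently $Y$) is uniform.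
   Context: For a discrete random variable $X$ with distribution $\{p(x_1),\dots,p(x_n)\}$ the message importance measure (MIM) is $L(\varpi,X)=\sum_i p(x_i)e^{\varpi(1-p(x_i))}$. For a pair $(X,Y)$ the conditional message importance measure (CMIM) is $L(\varpi,X\mid Y)=\sum_{j:\,p(y_j)>0} p(y_j)\sum_i p(x_i\mid y_j)e^{\varpi(1-p(x_i\mid y_j))}$. *)

(* Defs.v *)
From Stdlib Require Import Reals Lra.
Open Scope R_scope.

Fixpoint rsum (n : nat) (f : nat -> R) : R :=
  match n with
  | O => 0
  | S m => rsum m f + f m
  end.

Definition is_dist (K : nat) (p : nat -> R) : Prop :=
  (forall i, (i < K)%nat -> 0 <= p i) /\ rsum K p = 1.

Definition MIM (w : R) (K : nat) (p : nat -> R) : R :=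
  rsum K (fun i => p i * exp (w * (1 - p i))).

(* conditional MIM L(w, X | Y); W i j = p(x_i | y_j), py j = p(y_j) *)
Definition CMIM (w : R) (K : nat) (py : nat -> R) (W : nat -> nat -> R) : R :=
  rsum K (fun j =>
    if Rlt_dec 0 (py j) then py j * rsum K (fun i => W i j * exp (w * (1 - W i j)))
    else 0).

Definition marg (K : nat) (py : nat -> R) (W : nat -> nat -> R) : nat -> R :=
  fun i => rsum K (fun j => py j * W i j).

Definition symW (K : nat) (beta : R) : nat -> nat -> R :=
  fun i j => if Nat.eqb i j then 1 - beta else beta / INR (K - 1).

Definition unif (K : nat) : nat -> R := fun _ => / INR K.

Definition mim_gap (w : R) (K : nat) (beta : R) (py : nat -> R) : R :=
  MIM w K (marg K py (symW K beta)) - CMIM w K py (symW K beta).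

(* Main.v *)
Require Import Defs.
From Stdlib Require Import Reals Lra Lia.
Open Scope R_scope.

Lemma rsum_ext n f g : (forall i, (i < n)%nat -> f i = g i) -> rsum n f = rsum n g.
Proof.
  induction n; simpl; intros H; [reflexivity|].
  rewrite IHn by (intros; apply H; lia). rewrite H by lia. reflexivity.
Qed.

Lemma rsum_le n f g : (forall i, (i < n)%nat -> f i <= g i) -> rsum n f <= rsum n g.
Proof.
  induction n; simpl; intros H; [lra|].
  assert (rsum n f <= rsum n g) by (apply IHn; intros; apply H; lia).
  assert (f n <= g n) by (apply H; lia). lra.
Qed.

Lemma rsum_nonneg n f : (forall i, (i < n)%nat -> 0 <= f i) -> 0 <= rsum n f.
Proof.
  intros H. replace 0 with (rsum n (fun _ => 0)).
  apply rsum_le; auto. induction n; simpl; [reflexivity|]. rewrite IHn; [lra|].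
  intros; apply H; lia.
Qed.

Lemma rsum_affine n c d f : rsum n (fun i => c + d * f i) = INR n * c + d * rsum n f.
Proof.
  induction n; simpl rsum; [simpl; lra|]. rewrite IHn, S_INR. ring.
Qed.

Lemma rsum_scal n d f : rsum n (fun i => f i * d) = rsum n f * d.
Proof. induction n; simpl; [lra|]. rewrite IHn. ring. Qed.

Lemma rsum_plus n f g : rsum n (fun i => f i + g i) = rsum n f + rsum n g.
Proof. induction n; simpl; [lra|]. rewrite IHn. ring. Qed.

Lemma rsum_swap n m (F : nat -> nat -> R) :
  rsum n (fun i => rsum m (fun j => F i j)) = rsum m (fun j => rsum n (fun i => F i j)).
Proof.
  induction n; simpl.
  - induction m; simpl; [reflexivity|]. rewrite <- IHm. ring.
  - rewrite IHn. rewrite <- rsum_plus. reflexivity.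
Qed.

Lemma rsum_ind n j A B : (j < n)%nat ->
  rsum n (fun i => if Nat.eqb i j then A else B) = A + (INR n - 1) * B.
Proof.
  induction n; intros Hj; [lia|]. simpl rsum. rewrite S_INR.
  destruct (Nat.eq_dec j n) as [->|Hne].
  - rewrite Nat.eqb_refl.
    replace (rsum n (fun i => if Nat.eqb i n then A else B)) with (rsum n (fun _ => B)).
    + replace (rsum n (fun _ => B)) with (rsum n (fun i => 0 + B * 1)) by (apply rsum_ext; intros; ring).
      rewrite rsum_affine.
      replace (rsum n (fun _ => 1)) with (rsum n (fun i => 1 + 0 * 1)) by (apply rsum_ext; intros; ring).
      rewrite rsum_affine. ring.
    + apply rsum_ext. intros i Hi. destruct (Nat.eqb_spec i n); [lia|reflexivity].
  - rewrite IHn by lia. destruct (Nat.eqb_spec n j); [lia|]. ring.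
Qed.

Lemma key p a w : 0 < a -> 0 < w -> a * w <= 1 -> 0 <= p ->
  p * exp (w * (1 - p)) <= exp (w * (1 - a)) * (w * a * a) + exp (w * (1 - a)) * (1 - w * a) * p.
Proof.
  intros Ha Hw Haw Hp.
  set (u := w * (p - a)).
  assert (Hsplit : exp (w * (1 - p)) = exp (w * (1 - a)) * exp (- u)).
  { rewrite <- exp_plus. f_equal. unfold u. ring. }
  assert (H1 : 1 + u <= exp u).
  { destruct (Req_dec u 0) as [->|Hu]. rewrite exp_0; lra. left; apply exp_ineq1; auto. }
  assert (Hq : 0 <= p - a * u).
  { replace (p - a * u) with (p * (1 - a * w) + a * a * w) by (unfold u; ring).
    assert (0 <= p * (1 - a * w)) by (apply Rmult_le_pos; lra).
    assert (0 <= a * a * w) by (apply Rmult_le_pos; [nra|lra]). lra. }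
  assert (H2 : p <= (p - a * u) * (1 + u)).
  { assert (E : (p - a * u) * (1 + u) - p = u * (p - a) * (1 - a * w)) by (unfold u; ring).
    assert (0 <= u * (p - a)) by (unfold u; replace (w * (p - a) * (p - a)) with (w * ((p-a)*(p-a))) by ring; apply Rmult_le_pos; [lra|apply Rle_0_sqr]).
    assert (0 <= u * (p - a) * (1 - a * w)) by (apply Rmult_le_pos; lra). lra. }
  assert (H3 : p <= (p - a * u) * exp u) by nra.
  assert (Hinv : exp (- u) * exp u = 1) by (rewrite <- exp_plus; replace (-u+u) with 0 by ring; apply exp_0).
  assert (H4 : p * exp (- u) <= p - a * u).
  { assert (0 < exp (-u)) by apply exp_pos. nra. }
  rewrite Hsplit. assert (0 < exp (w * (1 - a))) by apply exp_pos.
  assert (E2 : exp (w * (1 - a)) * (w * a * a) + exp (w * (1 - a)) * (1 - w * a) * p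
            = exp (w * (1 - a)) * (p - a * u)) by (unfold u; ring).
  rewrite E2. nra.
Qed.

Theorem proposition3 (K : nat) (beta w : R) :
  (2 <= K)%nat -> 0 <= beta <= 1 -> 0 < w < 2 ->
  (forall py : nat -> R, is_dist K py ->
     mim_gap w K beta py <=
       exp (w * INR (K - 1) / INR K)
       - ((1 - beta) * exp (w * beta)
          + beta * exp (w * (1 - beta / INR (K - 1))))) /\
  mim_gap w K beta (unif K) =
       exp (w * INR (K - 1) / INR K)
       - ((1 - beta) * exp (w * beta)
          + beta * exp (w * (1 - beta / INR (K - 1)))).
Proof.
  intros HK Hb Hw.
  assert (HK2 : 2 <= INR K) by (replace 2 with (INR 2) by (simpl; ring); apply le_INR; lia).
  assert (HK1 : INR (K - 1) = INR K - 1) by (rewrite minus_INR by lia; simpl; ring).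
  assert (HWnn : forall i j, 0 <= symW K beta i j).
  { intros i j; unfold symW. destruct (Nat.eqb i j). lra.
    apply Rmult_le_pos; [lra|]. left; apply Rinv_0_lt_compat. lra. }
  assert (Hcol : forall j, (j < K)%nat -> rsum K (fun i => symW K beta i j) = 1).
  { intros j Hj. unfold symW. rewrite rsum_ind by auto. rewrite HK1. field. lra. }
  set (C := (1 - beta) * exp (w * beta) + beta * exp (w * (1 - beta / INR (K - 1)))).
  assert (Hinner : forall j, (j < K)%nat ->
     rsum K (fun i => symW K beta i j * exp (w * (1 - symW K beta i j))) = C).
  { intros j Hj. unfold symW.
    transitivity (rsum K (fun i => if Nat.eqb i j then (1-beta) * exp (w * (1 - (1-beta)))
                   else beta / INR (K-1) * exp (w * (1 - beta / INR (K-1))))).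
    { apply rsum_ext; intros i _; destruct (Nat.eqb i j); reflexivity. }
    rewrite rsum_ind by auto. unfold C. replace (1 - (1 - beta)) with beta by ring.
    rewrite HK1. field. lra. }
  assert (HC : forall py, is_dist K py -> CMIM w K py (symW K beta) = C).
  { intros py [Hnn Hs]. unfold CMIM.
    transitivity (rsum K (fun j => py j * C)).
    { apply rsum_ext. intros j Hj. rewrite Hinner by auto.
      destruct (Rlt_dec 0 (py j)); [reflexivity|].
      assert (py j = 0) by (specialize (Hnn j Hj); lra). rewrite H; ring. }
    rewrite rsum_scal, Hs. ring. }
  assert (Htarget : exp (w * INR (K - 1) / INR K) = exp (w * (1 - / INR K))).
  { f_equal. rewrite HK1. field. lra. }
  set (a := / INR K).
  assert (Ha : 0 < a) by (unfold a; apply Rinv_0_lt_compat; lra).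
  assert (Haw : a * w <= 1).
  { unfold a. apply (Rmult_le_reg_l (INR K)); [lra|].
    rewrite <- Rmult_assoc, Rinv_r by lra. lra. }
  assert (HaK : INR K * a = 1) by (unfold a; field; lra).
  split.
  - intros py Hpy. unfold mim_gap. rewrite HC by auto. fold C.
    rewrite Htarget. fold a.
    cut (MIM w K (marg K py (symW K beta)) <= exp (w * (1 - a))); [lra|].
    destruct Hpy as [Hnn Hs].
    assert (Hm : forall i, (i < K)%nat -> 0 <= marg K py (symW K beta) i).
    { intros i Hi. unfold marg. apply rsum_nonneg. intros j Hj.
      apply Rmult_le_pos; auto. }
    assert (Hms : rsum K (marg K py (symW K beta)) = 1).
    { unfold marg. rewrite rsum_swap.
      transitivity (rsum K (fun j => py j * 1)).
      - apply rsum_ext. intros j Hj.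
        transitivity (rsum K (fun i => symW K beta i j) * py j).
        + rewrite <- rsum_scal. apply rsum_ext; intros; ring.
        + rewrite Hcol by auto. ring.
      - rewrite rsum_scal, Hs; ring. }
    unfold MIM. eapply Rle_trans.
    + apply rsum_le. intros i Hi. apply (key _ a w); auto; lra.
    + rewrite rsum_affine, Hms.
      replace (INR K * (exp (w * (1 - a)) * (w * a * a)))
        with ((INR K * a) * (exp (w * (1 - a)) * (w * a))) by ring.
      rewrite HaK. lra.
  - assert (Hu : is_dist K (unif K)).
    { split. intros; unfold unif; left; apply Rinv_0_lt_compat; lra.
      unfold unif. replace (rsum K (fun _ => / INR K)) with (rsum K (fun i => / INR K + 0 * 0))
        by (apply rsum_ext; intros; ring). rewrite rsum_affine. field. lra. }
    unfold mim_gap. rewrite HC by auto. fold C. rewrite Htarget. fold a.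
    f_equal. unfold MIM.
    transitivity (rsum K (fun i => 0 + exp (w * (1 - a)) * a)).
    + apply rsum_ext. intros i Hi.
      assert (marg K (unif K) (symW K beta) i = a).
      { unfold marg, unif. fold a.
        transitivity (rsum K (fun j => symW K beta i j * a)).
        - apply rsum_ext; intros; ring.
        - rewrite rsum_scal. unfold symW.
          transitivity (rsum K (fun j => if Nat.eqb j i then 1 - beta else beta / INR (K-1)) * a).
          + f_equal. apply rsum_ext. intros j _. rewrite Nat.eqb_sym. reflexivity.
          + rewrite rsum_ind by auto. rewrite HK1. field. lra. }
      rewrite H. ring.
    + rewrite rsum_affine.
      replace (rsum K (fun _ => a)) with (rsum K (fun i => a + 0 * 0)) by (apply rsum_ext; intros; ring).
      rewrite rsum_affine.
      replace (INR K * 0 + exp (w * (1 - a)) * (INR K * a + 0 * rsum K (fun _ => 0)))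
        with (exp (w * (1 - a)) * (INR K * a)) by ring.
      rewrite HaK; ring.
Qed.
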